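(* Let $\epsilon_1,\epsilon_2,\dots$ be independent Rademacher random variables and $S_m=\epsilon_1+\dots+\epsilon_m$. Let $k\ge2$ be an integer and for $i=0,1,\dots,k-1$ let $$\delta_i:=\mathbb{P}\{S_{k^2+2i-1}=k+1\}-\mathbb{P}\{S_{k^2+2i}=k\}=\frac{\binom{k^2-1+2i}{k(k-1)/2+i-1}}{2^{k^2-1+2i}}-\frac{\binom{k^2+2i}{k(k-1)/2+i}}{2^{k^2+2i}}.$$ Then $$\delta_0\le\delta_1\le\dots\le\delta_{k-1}<0.$$
   Context: A Rademacher random variable takes the values $1$ and $-1$ each with probability $1/2$. *)

(* Defs.v *)
From HB Require Import structures.
From mathcomp Require Import all_boot all_order all_algebra.
Set Implicit Arguments. Unset Strict Implicit. Unset Printing Implicit Defensive.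
Import Order.TTheory GRing.Theory Num.Theory.
Local Open Scope ring_scope.

(* A sign vector e : {ffun 'I_m -> bool} encodes (eps_1,...,eps_m) with
   eps_i = +1 if e i = true and -1 otherwise. Independent Rademacher
   variables eps_1..eps_m have exactly the uniform law on such vectors. *)
Definition rad (b : bool) : int := if b then 1 else -1.

Definition S_sum (m : nat) (e : {ffun 'I_m -> bool}) : int :=
  \sum_(i < m) rad (e i).

Definition probS (R : realFieldType) (m : nat) (j : int) : R :=
  (#|[set e : {ffun 'I_m -> bool} | S_sum e == j]|)%:R / (2%:R ^+ m).

Definition delta (R : realFieldType) (k i : nat) : R :=
  probS R (k ^ 2 + 2 * i - 1)%N (k.+1)%:Z - probS R (k ^ 2 + 2 * i)%N k%:Z.

(* Main.v *)
Require Import Defs.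
From HB Require Import structures.
From mathcomp Require Import all_boot all_order all_algebra zify ring lra.
Import Order.TTheory GRing.Theory Num.Theory.
Local Open Scope ring_scope.

Lemma S_sumE m (e : {ffun 'I_m -> bool}) :
  S_sum e = (2 * #|[set i | e i]|)%:Z - m%:Z.
Proof.
rewrite /S_sum (bigID (fun i => e i)) /=.
rewrite (eq_bigr (fun _ => 1)); last by move=> i ->.
rewrite [X in _ + X](eq_bigr (fun _ => -1)); last by move=> i /negbTE ->.
rewrite !sumr_const.
have H1 : #|(fun i => e i)| = #|[set i | e i]| by apply: eq_card => i; rewrite inE.
have H2 : (#|[set i | e i]| + #|(fun i => ~~ e i)| = m)%N.
  rewrite -[RHS](card_ord m) -(cardC [set i | e i]); congr (_ + _)%N.
  by apply: eq_card => i; rewrite !inE.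
rewrite H1 mulNrn. move: H2. set a := #|[set i | e i]|. set b := #|_|. move=> H2.
have : (a%:Z + b%:Z = m%:Z) by rewrite -H2.
move=> ?. lia.

Qed.

Lemma count_S m t :
  #|[set e : {ffun 'I_m -> bool} | S_sum e == (2*t)%:Z - m%:Z]| = 'C(m,t).
Proof.
have -> : [set e : {ffun 'I_m -> bool} | S_sum e == (2*t)%:Z - m%:Z]
   = [set e : {ffun 'I_m -> bool} | #|[set i | e i]| == t].
  apply/setP => e; rewrite !inE S_sumE.
  apply/eqP/eqP; lia.
rewrite -[in RHS](card_ord m) -card_draws.
have inj : injective (fun e : {ffun 'I_m -> bool} => [set i | e i]).
  move=> e1 e2 /setP H; apply/ffunP => i; move: (H i); rewrite !inE //.
have -> : #|[set e : {ffun 'I_m -> bool} | #|[set i | e i]| == t]| =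
   #|[pred e : {ffun 'I_m -> bool} | #|[set i | e i]| == t]|.
  by apply: eq_card => e; rewrite !inE.
rewrite -(card_imset _ inj).
apply: eq_card => B; rewrite !inE; apply/imsetP/idP.
  by case=> e; rewrite inE => /eqP <- ->.
move=> HB; exists [ffun i => i \in B]; last by apply/setP=> i; rewrite !inE ffunE.
by rewrite inE; apply/eqP; rewrite -(eqP HB); apply: eq_card => i; rewrite !inE ffunE.

Qed.

Lemma probS_C (R : realFieldType) m t (j : int) : j = (2*t)%:Z - m%:Z ->
  probS R m j = 'C(m,t)%:R / 2%:R ^+ m.
Proof. by move=> ->; rewrite /probS count_S. Qed.

Lemma closed (R : realFieldType) (m n k : nat) : (0 < n)%N -> m = (2*n + k)%N ->
 'C(m-1, n-1)%:R / 2%:R ^+ (m-1) - 'C(m,n)%:R / 2%:R ^+ m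
   = - (k * 'C(m,n))%:R / (m%:R * 2%:R ^+ m) :> R.
Proof.
move=> n0 em.
have key : (m * 'C(m-1, n-1) = n * 'C(m,n))%N.
  by rewrite !subn1 mul_bin_diag prednK.
have m0 : (0 < m)%N by lia.
have mR : (m%:R : R) != 0 by rewrite pnatr_eq0 -lt0n.
have hx : ('C(m-1,n-1)%:R : R) = n%:R * 'C(m,n)%:R / m%:R.
  by rewrite -natrM -key natrM [m%:R * _]mulrC mulfK.
rewrite hx.
have e2 : (2%:R ^+ m : R) = 2%:R * 2%:R ^+ (m-1).
  by rewrite -exprS; congr (_ ^+ _); lia.
rewrite e2.
have mE : (m%:R : R) = 2%:R * n%:R + k%:R by rewrite em natrD natrM.
move: mR; rewrite mE => mR.
have p0 : (2%:R ^+ (m-1) : R) != 0 by rewrite expf_eq0 pnatr_eq0 andbF.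
rewrite natrM.
field.
by rewrite mR p0.
Qed.

Lemma mono_nat m n k : m = (2*n + k)%N -> (k*k <= 6*n + 3*k + 4)%N ->
  ('C(m.+2, n.+1) * m <= 4 * (m.+2) * 'C(m,n))%N.
Proof.
move=> em hk.
have k1 := mul_bin_down m.+2 n.+1.
have k2 := mul_bin_diag m.+1 n.
rewrite /= in k1 k2.
have q0 : (0 < (m.+2 - n.+1) * n.+1)%N by rewrite muln_gt0; apply/andP; split; lia.
rewrite -(leq_pmul2r q0).
have -> : ('C(m.+2, n.+1) * m * ((m.+2 - n.+1) * n.+1) = m * (m.+2 * (m.+1 * 'C(m,n))))%N.
  rewrite k2 [(m.+2 * _)%N]mulnCA k1; ring.
have ineq : (m * m.+1 <= 4 * ((m.+2 - n.+1) * n.+1))%N.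
  have -> : (m.+2 - n.+1 = n + k + 1)%N by lia.
  nia.
set c := 'C(m, n). set q := ((m.+2 - n.+1) * n.+1)%N.
have := leq_mul ineq (leqnn (m.+2 * c)). 
move=> H.
have E1 : (m * (m.+2 * (m.+1 * c)) = m * m.+1 * (m.+2 * c))%N by ring.
have E2 : (4 * m.+2 * c * q = 4 * q * (m.+2 * c))%N by ring.
by rewrite E1 E2.
Qed.

Theorem lemma2p2 (R : realFieldType) (k : nat) (hk : (2 <= k)%N) :
  (forall i : nat, (i < k)%N ->
     delta R k i =
       ('C(k ^ 2 - 1 + 2 * i, (k * (k - 1))./2 + i - 1))%:R / 2%:R ^+ (k ^ 2 - 1 + 2 * i)
     - ('C(k ^ 2 + 2 * i, (k * (k - 1))./2 + i))%:R / 2%:R ^+ (k ^ 2 + 2 * i)) /\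
  (forall i : nat, (i.+1 < k)%N -> delta R k i <= delta R k i.+1) /\
  delta R k (k - 1) < 0.
Proof.
have ek : (k ^ 2 = k * k)%N by rewrite expnS expn1.
have hh : ((k * (k - 1))./2 * 2 = k * (k - 1))%N.
  rewrite muln2 halfK.
  have -> : odd (k * (k - 1)) = false.
    case: k hk {ek} => // k' _. by rewrite oddM subSS subn0 /=; case: (odd k').
  by rewrite subn0.
set h := (k * (k - 1))./2 in hh *.
have h1 : (1 <= h)%N by nia.
have P1 : forall i : nat, 
     delta R k i =
       ('C(k ^ 2 - 1 + 2 * i, h + i - 1))%:R / 2%:R ^+ (k ^ 2 - 1 + 2 * i)
     - ('C(k ^ 2 + 2 * i, h + i))%:R / 2%:R ^+ (k ^ 2 + 2 * i).
  move=> i; rewrite /delta (@probS_C R _ (h + i + k)); last by lia.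
  rewrite (@probS_C R _ (h + i + k)); last by lia.
  have -> : (k ^ 2 - 1 + 2 * i = k ^ 2 + 2 * i - 1)%N by lia.
  rewrite -(bin_sub (n := (k ^ 2 + 2 * i - 1)%N) (m := (h + i - 1)%N)); last by lia.
  rewrite -(bin_sub (n := (k ^ 2 + 2 * i)%N) (m := (h + i)%N)); last by lia.
  have -> : (k ^ 2 + 2 * i - 1 - (h + i - 1) = h + i + k)%N by lia.
  by have -> : (k ^ 2 + 2 * i - (h + i) = h + i + k)%N by lia.
have P2 : forall i : nat, delta R k i =
   - (k * 'C(k ^ 2 + 2 * i, h + i))%:R / ((k ^ 2 + 2 * i)%:R * 2%:R ^+ (k ^ 2 + 2 * i)).
  move=> i; rewrite P1.
  have -> : (k ^ 2 - 1 + 2 * i = k ^ 2 + 2 * i - 1)%N by lia.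
  apply: closed; lia.
split; first by move=> i _; apply: P1.
split.
  move=> i _; rewrite !P2 !mulNr lerN2.
  have -> : (k ^ 2 + 2 * i.+1 = (k ^ 2 + 2 * i).+2)%N by lia.
  have -> : (h + i.+1 = (h + i).+1)%N by lia.
  have mn := @mono_nat (k ^ 2 + 2 * i) (h + i) k.
  set m := (k ^ 2 + 2 * i)%N in mn *. set n := (h + i)%N in mn *.
  have {}mn := mn ltac:(lia) ltac:(nia).
  rewrite ler_pdivrMr; last by rewrite mulr_gt0 // ?ltr0n ?exprn_gt0 //.
  rewrite mulrAC ler_pdivlMr; last by rewrite mulr_gt0 // ?ltr0n ?exprn_gt0 //; lia.
  rewrite -!natrX -!natrM ler_nat.
  have E1 : (k * 'C(m.+2, n.+1) * (m * 2 ^ m) = k * 2 ^ m * ('C(m.+2, n.+1) * m))%N by ring.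
  have E2 : (k * 'C(m, n) * (m.+2 * 2 ^ m.+2) = k * 2 ^ m * (4 * m.+2 * 'C(m, n)))%N.
    rewrite !expnS; ring.
  by rewrite E1 E2 leq_mul2l mn orbT.
rewrite P2 mulNr oppr_lt0 divr_gt0 // ?ltr0n ?muln_gt0 ?bin_gt0.
  apply/andP; split; lia.
by rewrite mulr_gt0 // ?ltr0n ?exprn_gt0 //; lia.
Qed.
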